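(* Let $\mu>\nu>0$ and let $(Y_i)_{i\ge0},(e_i)_{i\ge0}$ be sequences with values in $[0,1]$, with $e_0=1/2$, satisfying the decoy-state constraints (DS) for some reals $Q_\mu,Q_\nu,E_\mu,E_\nu$. Define $$Y_1^*=\frac{\mu^2Q_\nu e^{\nu}-\nu^2Q_\mu e^{\mu}}{\mu\nu(\mu-\nu)},\qquad e_1^*=\frac{\mu^2E_\nu Q_\nu e^{\nu}-\nu^2E_\mu Q_\mu e^{\mu}}{\mu^2Q_\nu e^{\nu}-\nu^2Q_\mu e^{\mu}},\qquad e_2^*Y_2^*:=\frac{2\big(\nu E_\mu Q_\mu e^{\mu}-\mu E_\nu Q_\nu e^{\nu}\big)}{\mu\nu(\mu-\nu)},$$ (these are the values of $Y_1,e_1$ and $e_2Y_2$ solving the four equations of (DS) when $Y_0=0$ and $Y_i=0$ for all $i\ge3$), assuming $\mu^2Q_\nu e^{\nu}\ne\nu^2Q_\mu e^{\mu}$. Assume $0<e_1^*\le 1/2$, and with $a=1+\log_2(1-e_1^* )$, $b=\log_2(1-e_1^* )-\log_2 e_1^*$ assume $(a-b)\frac{\nu}{\mu+\nu}+(b-2a)\ge0$. Then $$Y_1\big[1-h(e_1)\big]\ \ge\ Y_1^*\big[1-h(e_1^* )\big]+\frac{\nu}{2}\big(1+\log_2 e_1^*\big)\,e_2^*Y_2^* .$$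
   Context: $h(x)=-x\log_2 x-(1-x)\log_2(1-x)$ is the binary entropy function on $[0,1]$ (with $0\log_2 0=0$). For reals $\mu>\nu>0$, the decoy-state constraints (DS) on sequences $(Y_i)_{i\ge0},(e_i)_{i\ge0}$ with values in $[0,1]$ are $$Q_\mu=\sum_{i=0}^\infty \frac{\mu^i e^{-\mu}}{i!}Y_i,\quad Q_\nu=\sum_{i=0}^\infty \frac{\nu^i e^{-\nu}}{i!}Y_i,\quad E_\mu Q_\mu=\sum_{i=0}^\infty \frac{\mu^i e^{-\mu}}{i!}Y_ie_i,\quad E_\nu Q_\nu=\sum_{i=0}^\infty \frac{\nu^i e^{-\nu}}{i!}Y_ie_i.$$ *)

(* Defs.v *)
From Stdlib Require Import Reals.
From Coquelicot Require Import Coquelicot.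
Open Scope R_scope.

Definition log2 (x : R) : R := ln x / ln 2.

Definition xlog2x (x : R) : R := if Req_EM_T x 0 then 0 else x * log2 x.

Definition h (x : R) : R := - xlog2x x - xlog2x (1 - x).

Definition poisson (mu : R) (i : nat) : R := mu ^ i * exp (- mu) / INR (Factorial.fact i).

Definition Y1star (mu nu Qmu Qnu : R) : R :=
  (mu ^ 2 * Qnu * exp nu - nu ^ 2 * Qmu * exp mu) / (mu * nu * (mu - nu)).

Definition e1star (mu nu Qmu Qnu Emu Enu : R) : R :=
  (mu ^ 2 * Enu * Qnu * exp nu - nu ^ 2 * Emu * Qmu * exp mu)
  / (mu ^ 2 * Qnu * exp nu - nu ^ 2 * Qmu * exp mu).

Definition e2Y2star (mu nu Qmu Qnu Emu Enu : R) : R :=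
  2 * (nu * Emu * Qmu * exp mu - mu * Enu * Qnu * exp nu) / (mu * nu * (mu - nu)).

(* Main.v *)
Require Import Defs.
From Stdlib Require Import Reals Lra Psatz.
From Coquelicot Require Import Coquelicot.
Open Scope R_scope.

Lemma ln_le_m1 u : 0 < u -> ln u <= u - 1.
Proof. intro Hu. generalize (exp_ineq1_le (ln u)). rewrite exp_ln; lra. Qed.

Lemma ln2_pos : 0 < ln 2.
Proof. rewrite <- ln_1. apply ln_increasing; lra. Qed.

Lemma xln_bound x e : 0 <= x -> 0 < e -> x <> 0 -> x * (ln e - ln x) <= e - x.
Proof.
  intros Hx He Hx0.
  assert (Hxp : 0 < x) by lra.
  rewrite <- ln_div by lra.
  generalize (ln_le_m1 (e / x) ltac:(apply Rdiv_lt_0_compat; lra)). intro H.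
  apply Rmult_le_compat_l with (r := x) in H; [|lra].
  replace (x * (e / x - 1)) with (e - x) in H by (field; lra). exact H.
Qed.

Lemma gibbs x e : 0 <= x <= 1 -> 0 < e < 1 ->
  1 - h x >= 1 + (1 - x) * log2 (1 - e) + x * log2 e.
Proof.
  intros Hx He. unfold h, xlog2x, log2.
  generalize ln2_pos; intro L.
  assert (iL : 0 < / ln 2) by (apply Rinv_0_lt_compat; lra).
  assert (Hl1 : ln (1 - e) < 0) by (rewrite <- ln_1; apply ln_increasing; lra).
  assert (Hl2 : ln e < 0) by (rewrite <- ln_1; apply ln_increasing; lra).
  unfold Rdiv.
  destruct (Req_EM_T x 0) as [H0|H0]; destruct (Req_EM_T (1 - x) 0) as [H1|H1].
  - lra.
  - subst x. rewrite Rminus_0_r, ln_1.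
    assert (0 <= - ln (1 - e) * / ln 2) by (apply Rmult_le_pos; lra). lra.
  - assert (x = 1) by lra. subst x.
    replace (1 - 1) with 0 by ring.
    assert (0 <= - ln e * / ln 2) by (apply Rmult_le_pos; lra). rewrite ln_1. lra.
  - generalize (xln_bound x e ltac:(lra) ltac:(lra) H0).
    generalize (xln_bound (1 - x) (1 - e) ltac:(lra) ltac:(lra) H1).
    intros F2 F1.
    assert (0 <= / ln 2 * (-(x * (ln e - ln x) + (1 - x) * (ln (1 - e) - ln (1 - x)))))
      by (apply Rmult_le_pos; lra).
    nra.
Qed.

Lemma one_minus_h e : 0 < e < 1 ->
  1 - h e = (1 + log2 (1 - e)) - (log2 (1 - e) - log2 e) * e.
Proof.
  intros He. unfold h, xlog2x.
  destruct (Req_EM_T e 0); [lra|]. destruct (Req_EM_T (1 - e) 0); [lra|]. ring.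
Qed.
Theorem theorem2 (mu nu Qmu Qnu Emu Enu : R) (Y e : nat -> R)
  (Hnu : 0 < nu) (Hmunu : nu < mu)
  (HY : forall i, 0 <= Y i <= 1) (He : forall i, 0 <= e i <= 1)
  (He0 : e 0%nat = 1 / 2)
  (DSQmu : is_series (fun i => poisson mu i * Y i) Qmu)
  (DSQnu : is_series (fun i => poisson nu i * Y i) Qnu)
  (DSEmu : is_series (fun i => poisson mu i * Y i * e i) (Emu * Qmu))
  (DSEnu : is_series (fun i => poisson nu i * Y i * e i) (Enu * Qnu))
  (Hden : mu ^ 2 * Qnu * exp nu <> nu ^ 2 * Qmu * exp mu)
  (He1 : 0 < e1star mu nu Qmu Qnu Emu Enu <= 1 / 2)
  (Hab : let a := 1 + log2 (1 - e1star mu nu Qmu Qnu Emu Enu) in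
         let b := log2 (1 - e1star mu nu Qmu Qnu Emu Enu)
                  - log2 (e1star mu nu Qmu Qnu Emu Enu) in
         (a - b) * (nu / (mu + nu)) + (b - 2 * a) >= 0) :
  Y 1%nat * (1 - h (e 1%nat)) >=
    Y1star mu nu Qmu Qnu * (1 - h (e1star mu nu Qmu Qnu Emu Enu))
    + nu / 2 * (1 + log2 (e1star mu nu Qmu Qnu Emu Enu))
      * e2Y2star mu nu Qmu Qnu Emu Enu.
Proof.
  cbv zeta in Hab.
  set (E := e1star mu nu Qmu Qnu Emu Enu) in *.
  assert (HE : 0 < E < 1) by lra.
  rewrite (one_minus_h E HE).
  set (a := 1 + log2 (1 - E)) in *.
  set (b := log2 (1 - E) - log2 E) in *.
  replace (1 + log2 E) with (a - b) by (unfold a, b; ring).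
  assert (L := ln2_pos).
  assert (Ha : 0 <= a).
  { unfold a, log2. assert (ln (1/2) <= ln (1 - E)).
    { destruct (Req_dec (1 - E) (1/2)) as [Q|Q]; [rewrite Q; lra|].
      left. apply ln_increasing; lra. }
    replace (ln (1/2)) with (- ln 2) in H.
    2:{ unfold Rdiv. rewrite Rmult_1_l, ln_Rinv by lra. ring. }
    apply Rmult_le_reg_r with (ln 2); [lra|]. rewrite Rmult_0_l, Rmult_plus_distr_r.
    field_simplify; lra. }
  assert (Hab2 : a - b <= 0).
  { replace (a - b) with (1 + log2 E) by (unfold a, b; ring). unfold log2.
    assert (ln E <= ln (1/2)).
    { destruct (Req_dec E (1/2)) as [Q|Q]; [rewrite Q; lra|].
      left. apply ln_increasing; lra. }
    replace (ln (1/2)) with (- ln 2) in H.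
    2:{ unfold Rdiv. rewrite Rmult_1_l, ln_Rinv by lra. ring. }
    apply Rmult_le_reg_r with (ln 2); [lra|]. rewrite Rmult_0_l, Rmult_plus_distr_r.
    field_simplify; lra. }
  assert (HK : (a - b) * nu + (b - 2 * a) * (mu + nu) >= 0).
  { apply Rge_le in Hab. apply Rle_ge.
    replace ((a - b) * nu + (b - 2 * a) * (mu + nu)) with
      (((a - b) * (nu / (mu + nu)) + (b - 2 * a)) * (mu + nu)) by (field; lra).
    apply Rmult_le_pos; lra. }
  assert (HG : Y 1%nat * (1 - h (e 1%nat)) >= a * Y 1%nat - b * Y 1%nat * e 1%nat).
  { generalize (gibbs (e 1%nat) E (He 1%nat) HE). intro G.
    replace (a * Y 1%nat - b * Y 1%nat * e 1%nat) with
      (Y 1%nat * (1 + (1 - e 1%nat) * log2 (1 - E) + e 1%nat * log2 E))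
      by (unfold a, b; ring).
    apply Rle_ge, Rmult_le_compat_l; [apply HY|lra]. }
  clearbody a b.
  apply Rle_ge. apply Rge_le in HG. eapply Rle_trans; [|exact HG]. clear HG Hab.
  set (M := mu * nu * (mu - nu)).
  assert (HM : 0 < M) by (unfold M; apply Rmult_lt_0_compat; [nra|lra]).
  assert (eM := exp_pos mu). assert (eN := exp_pos nu).
  set (c1 := - a * nu ^ 2 * exp mu / M).
  set (c2 := a * mu ^ 2 * exp nu / M).
  set (c3 := a * nu ^ 2 * exp mu / M).
  set (c4 := (- b * mu ^ 2 * exp nu - nu * mu * (a - b) * exp nu) / M).
  set (u := fun i => c1 * (poisson mu i * Y i) + c2 * (poisson nu i * Y i)
                   + c3 * (poisson mu i * Y i * e i) + c4 * (poisson nu i * Y i * e i)).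
  assert (Hu : is_series u (c1 * Qmu + c2 * Qnu + c3 * (Emu * Qmu) + c4 * (Enu * Qnu))).
  { apply (is_series_plus _ _ _ _ (is_series_plus _ _ _ _
       (is_series_plus _ _ _ _ (is_series_scal_l c1 _ _ DSQmu) (is_series_scal_l c2 _ _ DSQnu))
       (is_series_scal_l c3 _ _ DSEmu)) (is_series_scal_l c4 _ _ DSEnu)). }
  assert (HT : Y1star mu nu Qmu Qnu * (a - b * E) + nu / 2 * (a - b) * e2Y2star mu nu Qmu Qnu Emu Enu
     = c1 * Qmu + c2 * Qnu + c3 * (Emu * Qmu) + c4 * (Enu * Qnu)).
  { assert (HD : mu ^ 2 * Qnu * exp nu - nu ^ 2 * Qmu * exp mu <> 0) by lra.
    unfold E, e1star, Y1star, e2Y2star, c1, c2, c3, c4, M in *.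
    field. split; [lra|]. split; [lra|]. lra. }
  rewrite HT.
  assert (Hform : forall i, u i = / (M * INR (Factorial.fact i)) *
     ((mu ^ 2 * nu ^ i - nu ^ 2 * mu ^ i) * (a * Y i - b * Y i * e i)
      + nu * (a - b) * (nu * mu ^ i - mu * nu ^ i) * Y i * e i)).
  { intro i. unfold u, c1, c2, c3, c4, poisson. rewrite !exp_Ropp.
    field. split; [apply INR_fact_neq_0|]. split; lra. }
  set (X := a * Y 1%nat - b * Y 1%nat * e 1%nat).
  assert (Hu1 : u 1%nat = X).
  { rewrite Hform. unfold X, M. simpl. field. lra. }
  assert (Hu0 : u 0%nat <= 0).
  { rewrite Hform. rewrite He0, !pow_O. change (INR (Factorial.fact 0)) with 1.
    assert (0 < / (M * 1)) by (apply Rinv_0_lt_compat; lra).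
    assert (0 <= Y 0%nat) by apply HY.
    assert (Eq : (mu ^ 2 * 1 - nu ^ 2 * 1) * (a * Y 0%nat - b * Y 0%nat * (1 / 2)) +
      nu * (a - b) * (nu * 1 - mu * 1) * Y 0%nat * (1 / 2)
      = - ((mu - nu) * Y 0%nat / 2) * ((a - b) * nu + (b - 2 * a) * (mu + nu))) by field.
    rewrite Eq. assert (0 <= (mu - nu) * Y 0%nat / 2) by (apply Rmult_le_pos; [apply Rmult_le_pos|]; lra).
    assert (0 <= / (M * 1) * (((mu - nu) * Y 0%nat / 2) * ((a - b) * nu + (b - 2 * a) * (mu + nu)))).
    { apply Rmult_le_pos; [lra|]. apply Rmult_le_pos; lra. }
    lra. }
  assert (Huk : forall k, u (S (S k)) <= 0).
  { intro k. rewrite Hform.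
    assert (0 < / (M * INR (Factorial.fact (S (S k))))).
    { apply Rinv_0_lt_compat, Rmult_lt_0_compat; [lra|apply INR_fact_lt_0]. }
    assert (HPQ : nu ^ k <= mu ^ k) by (apply pow_incr; lra).
    assert (HP : 0 <= nu ^ k) by (apply pow_le; lra).
    set (P := nu ^ k) in *. set (Q := mu ^ k) in *.
    assert (Y0 := HY (S (S k))). assert (E0 := He (S (S k))).
    set (y := Y (S (S k))) in *. set (z := e (S (S k))) in *.
    replace ((mu ^ 2 * nu ^ S (S k) - nu ^ 2 * mu ^ S (S k)) * (a * y - b * y * z) +
      nu * (a - b) * (nu * mu ^ S (S k) - mu * nu ^ S (S k)) * y * z) with
      (y * ((mu^2*nu^2*(P - Q)) * a * (1 - z) + z * (a - b) * (mu * nu^2 * P * (mu - nu))))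
      by (unfold P, Q; simpl; ring).
    assert (0 <= mu ^ 2 * nu ^ 2) by (apply Rmult_le_pos; apply pow_le; lra).
    assert (T1 : mu ^ 2 * nu ^ 2 * (P - Q) * a * (1 - z) <= 0).
    { assert (0 <= mu ^ 2 * nu ^ 2 * (Q - P)) by (apply Rmult_le_pos; lra).
      assert (0 <= a * (1 - z)) by (apply Rmult_le_pos; lra). nra. }
    assert (T2 : z * (a - b) * (mu * nu ^ 2 * P * (mu - nu)) <= 0).
    { assert (0 <= mu * nu ^ 2 * P * (mu - nu)).
      { repeat apply Rmult_le_pos; try lra; apply pow_le; lra. }
      assert (z * (a - b) <= 0) by nra. nra. }
    assert (y * (mu ^ 2 * nu ^ 2 * (P - Q) * a * (1 - z) + z * (a - b) * (mu * nu ^ 2 * P * (mu - nu))) <= 0) by nra.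
    nra. }
  assert (Hsum : forall n, sum_n u (S n) <= X).
  { induction n.
    - rewrite sum_Sn, sum_O. unfold plus; simpl. rewrite Hu1. lra.
    - rewrite sum_Sn. unfold plus; simpl. generalize (Huk n). lra. }
  assert (Hu' : is_lim_seq (sum_n u) (c1 * Qmu + c2 * Qnu + c3 * (Emu * Qmu) + c4 * (Enu * Qnu))) by exact Hu.
  assert (Hev : eventually (fun n => sum_n u n <= (fun _ : nat => X) n)).
  { exists 1%nat. intros n Hn. destruct n as [|n]; [lia|]. apply Hsum. }
  exact (is_lim_seq_le_loc (sum_n u) (fun _ => X) _ X Hev Hu' (is_lim_seq_const X)).
Qed.
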